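(* Let $R$ be a commutative unital ring. Then the following are equivalent: (i) $\operatorname{sr}(R) \le 2$; (ii) for every ideal $I$ of $R$, the natural map $\operatorname{SL}_2(R) \to \operatorname{SL}_2(R/I)$ is surjective; (iii) for every ideal $I$ of $R$ and every $n \ge 2$, the natural map $\operatorname{SL}_n(R) \to \operatorname{SL}_n(R/I)$ is surjective.
   Context: A row $(r_1,\dots,r_n)\in R^n$ is unimodular if $\sum_i R r_i = R$; $\operatorname{Um}_n(R)$ is the set of such rows. A row $(r_1,\dots,r_{n+1})\in\operatorname{Um}_{n+1}(R)$ ($n>0$) is stable if there exist $s_1,\dots,s_n\in R$ with $(r_1+s_1r_{n+1},\dots,r_n+s_nr_{n+1})\in\operatorname{Um}_n(R)$. An integer $n>0$ lies in the stable range of $R$ if every row in $\operatorname{Um}_{n+1}(R)$ is stable; the Bass stable rank $\operatorname{sr}(R)$ is the least integer in the stable range of $R$ (and $\infty$ if there is none). *)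

(* Defs.v *)
From HB Require Import structures.
From mathcomp Require Import all_boot all_order all_algebra.
Set Implicit Arguments. Unset Strict Implicit. Unset Printing Implicit Defensive.
Import GRing.Theory.
Local Open Scope ring_scope.

Definition is_ideal (R : comPzRingType) (I : R -> Prop) : Prop :=
  [/\ I 0,
      (forall x y, I x -> I y -> I (x + y)) &
      (forall r x, I x -> I (r * x))].

Definition unimodular (R : comPzRingType) (n : nat) (r : 'I_n -> R) : Prop :=
  exists c : 'I_n -> R, \sum_(i < n) c i * r i = 1.

Definition stable_row (R : comPzRingType) (n : nat) (r : 'I_n.+1 -> R) : Prop :=
  exists s : 'I_n -> R,
    unimodular (fun i : 'I_n => r (widen_ord (leqnSn n) i) + s i * r ord_max).

Definition in_stable_range (R : comPzRingType) (n : nat) : Prop :=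
  (0 < n)%N /\ forall r : 'I_n.+1 -> R, unimodular r -> stable_row r.

(* sr(R) <= m : the least integer in the stable range is at most m,
   i.e. some k with 0 < k <= m lies in the stable range. *)
Definition sr_le (R : comPzRingType) (m : nat) : Prop :=
  exists k : nat, (k <= m)%N /\ in_stable_range R k.

(* The natural map SL_n(R) -> SL_n(R/I) is surjective: every matrix over R
   whose reduction mod I lies in SL_n(R/I) (i.e. det A = 1 mod I; every element
   of SL_n(R/I) has such a lift) is congruent mod I, entrywise, to a matrix
   of determinant 1 over R. *)
Definition SL_surj (R : comPzRingType) (I : R -> Prop) (n : nat) : Prop :=
  forall A : 'M[R]_n, I (\det A - 1) ->
    exists B : 'M[R]_n, \det B = 1 /\ (forall i j, I (B i j - A i j)).

(* Main.v *)
Require Import Defs.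
From mathcomp Require Import all_boot all_order all_algebra ring.
Set Implicit Arguments. Unset Strict Implicit. Unset Printing Implicit Defensive.
Import GRing.Theory.
Local Open Scope ring_scope.

Lemma det2 (R : comPzRingType) (A : 'M[R]_2) : \det A = A 0 0 * A 1 1 - A 0 1 * A 1 0.
Proof.
rewrite (expand_det_col _ 0) !big_ord_recl big_ord0 addr0 /cofactor !det_mx11 !mxE /=.
rewrite (_ : lift (lift ord0 ord0) 0 = 0 :> 'I_2); last by apply/val_inj.
rewrite (_ : lift ord0 ord0 = 1 :> 'I_2); last by apply/val_inj.
rewrite /bump /= expr0 expr1 mul1r mulN1r mulrN; congr (_ - _); by rewrite mulrC.
Qed.

Definition stab2 (R : comPzRingType) := forall a b c x y z : R, x * a + y * b + z * c = 1 ->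
  exists s0 s1 u w : R, u * (a + s0 * c) + w * (b + s1 * c) = 1.

Lemma det_adj1 (R : comPzRingType) n (T : 'M[R]_n) : \det T = 1 -> \det (\adj T) = 1.
Proof.
move=> dT; have : \det (\adj T *m T) = 1 by rewrite mul_adj_mx dT det1.
by rewrite det_mulmx dT mulr1.
Qed.

Lemma sum_delta (R : comPzRingType) p (i : 'I_p) (f : 'I_p -> R) :
  \sum_(l < p) (1%:M : 'M[R]_p) i l * f l = f i.
Proof.
rewrite (bigD1 i) //= big1 ?addr0 => [|l hl]; first by rewrite mxE eqxx mul1r.
by rewrite mxE eq_sym (negbTE hl) mul0r.
Qed.

Section Ideal.
Variables (R : comPzRingType) (I : R -> Prop).
Hypothesis hI : is_ideal I.

Lemma I0 : I 0. Proof. by case: hI. Qed.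
Lemma ID x y : I x -> I y -> I (x + y). Proof. by case: hI => _ h _; apply: h. Qed.
Lemma IMl r x : I x -> I (r * x). Proof. by case: hI => _ _ h; apply: h. Qed.
Lemma IMr r x : I x -> I (x * r). Proof. by rewrite mulrC; apply: IMl. Qed.
Lemma IN x : I x -> I (- x). Proof. by move=> h; rewrite -mulN1r; apply: IMl. Qed.
Lemma IB x y : I x -> I y -> I (x - y). Proof. by move=> hx hy; apply: ID => //; apply: IN. Qed.
Lemma Isum n (F : 'I_n -> R) : (forall i, I (F i)) -> I (\sum_i F i).
Proof. by move=> h; apply: (big_ind I I0 ID) => i _; apply: h. Qed.
Lemma Icong_mul x1 x2 y1 y2 : I (x1 - x2) -> I (y1 - y2) -> I (x1 * y1 - x2 * y2).
Proof.
move=> hx hy; have -> : x1 * y1 - x2 * y2 = x1 * (y1 - y2) + (x1 - x2) * y2.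
  by rewrite mulrBr mulrBl addrA subrK.
by apply: ID; [apply: IMl | apply: IMr].
Qed.
Lemma Icong_add x1 x2 y1 y2 : I (x1 - x2) -> I (y1 - y2) -> I ((x1 + y1) - (x2 + y2)).
Proof.
move=> hx hy; have -> : (x1 + y1) - (x2 + y2) = (x1 - x2) + (y1 - y2).
  by rewrite opprD addrACA.
exact: ID.
Qed.

Definition Imx m n (M : 'M[R]_(m, n)) := forall i j, I (M i j).

Lemma mxBsub m n (A B : 'M[R]_(m, n)) i j : (A - B) i j = A i j - B i j.
Proof. by rewrite !mxE. Qed.

Lemma det_cong n (M M' : 'M[R]_n) : Imx (M - M') -> I (\det M - \det M').
Proof.
move=> h; rewrite /determinant.
apply: (big_ind2 (fun x y => I (x - y))); first by rewrite subrr; apply: I0.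
  by move=> *; apply: Icong_add.
move=> s _; apply: Icong_mul; first by rewrite subrr; apply: I0.
apply: (big_ind2 (fun x y => I (x - y))); first by rewrite subrr; apply: I0.
  by move=> *; apply: Icong_mul.
by move=> i _; rewrite -mxBsub; apply: h.
Qed.

Lemma Imx_mull m n p (A : 'M[R]_(m, n)) (B : 'M[R]_(n, p)) : Imx B -> Imx (A *m B).
Proof. by move=> h i j; rewrite mxE; apply: Isum => k; apply: IMl. Qed.

Definition P n (A : 'M[R]_n) := exists B : 'M[R]_n, \det B = 1 /\ (forall i j, I (B i j - A i j)).

Lemma P_mul n (T A : 'M[R]_n) : \det T = 1 -> P (T *m A) -> P A.
Proof.
move=> dT [B [dB hB]]; exists (\adj T *m B); split.
  have : \det (\adj T *m T) = 1 by rewrite mul_adj_mx dT det1.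
  by rewrite det_mulmx dT mulr1 => h; rewrite det_mulmx h dB mulr1.
have -> : A = \adj T *m (T *m A) by rewrite mulmxA mul_adj_mx dT mul1mx.
move=> i j; rewrite -mxBsub -mulmxBr; apply: Imx_mull => k l.
by rewrite mxBsub.
Qed.

Lemma P_cong n (A A' : 'M[R]_n) : Imx (A - A') -> P A' -> P A.
Proof.
move=> h [B [dB hB]]; exists B; split => // i j.
have -> : B i j - A i j = (B i j - A' i j) - (A i j - A' i j).
  by rewrite opprB addrA subrK.
by apply: IB => //; rewrite -mxBsub; apply: h.
Qed.

Lemma Imx_block m1 m2 n1 n2 (Aul : 'M[R]_(m1, n1)) (Aur : 'M[R]_(m1, n2))
  (Adl : 'M[R]_(m2, n1)) (Adr : 'M[R]_(m2, n2)) :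
  Imx Aul -> Imx Aur -> Imx Adl -> Imx Adr -> Imx (block_mx Aul Aur Adl Adr).
Proof.
move=> h1 h2 h3 h4 i j.
case: (split_ordP i) => i' ->; case: (split_ordP j) => j' ->.
- by rewrite block_mxEul.
- by rewrite block_mxEur.
- by rewrite block_mxEdl.
- by rewrite block_mxEdr.
Qed.

Lemma Imx0 m n : Imx (0 : 'M[R]_(m, n)).
Proof. by move=> i j; rewrite mxE; apply: I0. Qed.

Lemma P_block n (r : 'rV[R]_n) (D : 'M[R]_n) :
  P D -> P (block_mx 1%:M r 0 D : 'M[R]_(1 + n)).
Proof.
move=> [B [dB hB]]; exists (block_mx 1%:M r 0 B); split.
  by rewrite det_ublock det1 dB mulr1.
move=> i j; rewrite -mxBsub opp_block_mx add_block_mx !subrr.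
apply: Imx_block; try apply: Imx0.
by move=> k l; rewrite mxBsub; apply: hB.
Qed.


Section Step.
Hypothesis hs : stab2 R.

Lemma step m (IH : forall D : 'M[R]_(1 + m), I (\det D - 1) -> P D)
  (A : 'M[R]_(2 + m)) : I (\det A - 1) -> P A.
Proof.
move=> he; set e := \det A - 1.
set tsum := \sum_(k < m) A (rshift 2 k) 0 * cofactor A (rshift 2 k) 0.
pose i0 := lshift m (0 : 'I_2); pose i1 := lshift m (1 : 'I_2).
have hdet : \det A = A i0 0 * cofactor A i0 0 + A i1 0 * cofactor A i1 0 + tsum.
  rewrite (expand_det_col _ 0). rewrite (@big_split_ord _ _ _ 2 m) /= !big_ord_recl big_ord0 addr0.
  by congr (_ + _ + _); congr (A _ _ * cofactor A _ _); apply: val_inj.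
have := hs (a := A i0 0) (b := A i1 0) (c := tsum - e) (x := cofactor A i0 0)
   (y := cofactor A i1 0) (z := 1).
case=> [|s0 [s1 [u [w huw]]]].
  rewrite mul1r addrA [_ * A i0 0]mulrC [_ * A i1 0]mulrC -hdet /e.
  by rewrite opprB addrC subrK.
pose sv (i : 'I_2) := if nat_of_ord i == 0%N then s0 else s1.
pose X : 'M[R]_(2, m) := \matrix_(i, k) (sv i * cofactor A (rshift 2 k) 0).
pose E : 'M[R]_(2 + m) := block_mx 1%:M X 0 1%:M.
have dE : \det E = 1 by rewrite det_ublock !det1 mulr1.
pose A1 := E *m A.
have A1u i : A1 (lshift m i) 0 = A (lshift m i) 0 + sv i * tsum.
  rewrite mxE big_split_ord /=; congr (_ + _).
    under eq_bigr do rewrite block_mxEul.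
    by rewrite sum_delta.
  under eq_bigr do rewrite block_mxEur mxE.
  rewrite /tsum big_distrr /=; apply: eq_bigr => k _.
  by rewrite -mulrA [cofactor _ _ _ * _]mulrC.
have A1d k : A1 (rshift 2 k) 0 = A (rshift 2 k) 0.
  rewrite mxE big_split_ord /= big1 ?add0r => [|l _]; last by rewrite block_mxEdl mxE mul0r.
  under eq_bigr do rewrite block_mxEdr.
  by rewrite sum_delta.
pose M2 : 'M[R]_2 := \matrix_(i, j) (if nat_of_ord j == 0%N then A (lshift m i) 0 + sv i * (tsum - e)
   else if nat_of_ord i == 0%N then - w else u).
have dM2 : \det M2 = 1.
  rewrite det2 !mxE /= /sv /= mulNr opprK -huw.
  by congr (_ + _); rewrite mulrC.
pose L : 'M[R]_(m, 2) := \matrix_(k, j) (if nat_of_ord j == 0%N then A (rshift 2 k) 0 else 0).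
pose S : 'M[R]_(2 + m) := block_mx M2 0 L 1%:M.
have dS : \det S = 1 by rewrite det_lblock dM2 det1 mulr1.
have h0 : (0 : 'I_(2 + m)) = lshift m 0 by apply: val_inj.
have hcol j : I (A1 j 0 - S j 0).
  case: (split_ordP j) => j' ->.
    rewrite A1u h0 block_mxEul mxE /= -h0. rewrite opprD addrACA subrr add0r -mulrBr opprB addrC subrK.
    by apply: IMl.
  rewrite A1d h0 block_mxEdl mxE /=. rewrite -h0 subrr; apply: I0.
pose N := \adj S *m A1.
have hN i : I (N i 0 - (1%:M : 'M[R]_(2+m)) i 0).
  have -> : (1%:M : 'M[R]_(2+m)) = \adj S *m S by rewrite mul_adj_mx dS.
  rewrite -mxBsub -mulmxBr mxE; apply: Isum => k; apply: IMl; rewrite mxBsub; exact: hcol.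
pose N0 : 'M[R]_(1 + (1 + m)) := N.
pose N' : 'M[R]_(1 + (1 + m)) := block_mx 1%:M (ursubmx N0) 0 (drsubmx N0).
have hNN : Imx (N0 - N').
  rewrite -{1}(submxK N0) /N' opp_block_mx add_block_mx !subrr.
  apply: Imx_block; try apply: Imx0.
    have hl : lshift (1 + m) (0 : 'I_1) = 0 :> 'I_(1 + (1 + m)) by apply: val_inj.
    move=> k l; rewrite !ord1 mxBsub mxE !hl.
    by have := hN (@lshift 1 (1 + m) ord0); rewrite !mxE /=.
  move=> k l; rewrite !ord1 mxBsub mxE (_ : lshift _ 0 = 0); last by apply: val_inj.
  by have := hN (rshift 1 k); rewrite !mxE /= subr0.
have dN : \det N0 = \det A by rewrite /N0 /N det_mulmx det_adj1 // det_mulmx dE !mul1r.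
have dN' : \det N' = \det (drsubmx N0) by rewrite det_ublock det1 mul1r.
have hD : I (\det (drsubmx N0) - 1).
  rewrite -dN'; have := det_cong hNN; rewrite dN => h.
  have -> : \det N' - 1 = (\det A - 1) - (\det A - \det N').
    by rewrite opprB [RHS]addrC addrA subrK.
  exact: IB.
apply: (P_mul dE); apply: (P_mul (det_adj1 dS)); change (P N0).
apply: (P_cong hNN); apply: P_block; exact: IH.
Qed.

Lemma base2 (A : 'M[R]_2) : I (\det A - 1) -> P A.
Proof.
move=> he; set e := \det A - 1.
have := hs (a := A 0 0) (b := A 0 1) (c := e) (x := A 1 1) (y := - A 1 0) (z := -1).
case=> [|s0 [s1 [u [w huw]]]].
  by rewrite /e det2; ring.
set a' := A 0 0 + s0 * e; set b' := A 0 1 + s1 * e.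
set f := a' * A 1 1 - b' * A 1 0 - 1.
have hf : I f.
  have -> : f = e + s0 * e * A 1 1 - s1 * e * A 1 0 by rewrite /f /a' /b' /e det2; ring.
  by apply: IB; [apply: ID => //; apply: IMr; apply: IMl | apply: IMr; apply: IMl].
exists (\matrix_(i, j) if nat_of_ord i == 0%N then (if nat_of_ord j == 0%N then a' else b')
   else (if nat_of_ord j == 0%N then A 1 0 + f * w else A 1 1 - f * u)).
split.
  rewrite det2 !mxE /=.
  have -> : 1 = a' * A 1 1 - b' * A 1 0 - f * (u * a' + w * b') by rewrite huw /f; ring.
  ring.
move=> i j; rewrite mxE.
case: i => [[|[|i]] hi] //; case: j => [[|[|j]] hj] //=.
- rewrite (_ : Ordinal hi = 0); last by apply: val_inj.
  rewrite (_ : Ordinal hj = 0); last by apply: val_inj.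
  by rewrite /a' addrC addKr; apply: IMl.
- rewrite (_ : Ordinal hi = 0); last by apply: val_inj.
  rewrite (_ : Ordinal hj = 1); last by apply: val_inj.
  by rewrite /b' addrC addKr; apply: IMl.
- rewrite (_ : Ordinal hi = 1); last by apply: val_inj.
  rewrite (_ : Ordinal hj = 0); last by apply: val_inj.
  by rewrite addrC addKr; apply: IMr.
- rewrite (_ : Ordinal hi = 1); last by apply: val_inj.
  rewrite (_ : Ordinal hj = 1); last by apply: val_inj.
  by rewrite addrC addKr; apply: IN; apply: IMr.
Qed.

Lemma all_n n : (2 <= n)%N -> forall A : 'M[R]_n, I (\det A - 1) -> P A.
Proof.
case: n => [|[|k]] //= _.
elim: k => [|k IHk]; first exact: base2.
exact: (step IHk).
Qed.

End Step.

End Ideal.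

Lemma stab2_of_sr (R : comPzRingType) : sr_le R 2 -> stab2 R.
Proof.
case=> k [hk2 [hk0 hk]]; case: k hk2 hk0 hk => [|[|[|k]]] // _ _ hk a b c x y z hxyz.
- pose r := fun i : 'I_2 => if nat_of_ord i == 0%N then a else y * b + z * c.
  have [|s [cc hcc]] := hk r.
    exists (fun i : 'I_2 => if nat_of_ord i == 0%N then x else 1).
    rewrite !big_ord_recl big_ord0 /= /r /=; rewrite -[X in _ = X]hxyz; ring.
  move: hcc; rewrite big_ord_recl big_ord0 /= /r /= => hcc.
  exists (s ord0 * z), 0, (cc ord0), (cc ord0 * s ord0 * y).
  by rewrite -[X in _ = X]hcc; ring.
- pose r := fun i : 'I_3 => if nat_of_ord i == 0%N then a
     else if nat_of_ord i == 1%N then b else c.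
  have [|s [cc hcc]] := hk r.
    exists (fun i : 'I_3 => if nat_of_ord i == 0%N then x
      else if nat_of_ord i == 1%N then y else z).
    by rewrite !big_ord_recl big_ord0 /= /r /=; rewrite -[X in _ = X]hxyz; ring.
  move: hcc; rewrite !big_ord_recl big_ord0 /= /r /= => hcc.
  exists (s ord0), (s (lift ord0 ord0)), (cc ord0), (cc (lift ord0 ord0)).
  by rewrite -[X in _ = X]hcc; ring.
Qed.

Lemma sr_of_SL2 (R : comPzRingType) :
  (forall I : R -> Prop, is_ideal I -> SL_surj I 2) -> sr_le R 2.
Proof.
move=> H; exists 2%N; split => //; split => // r [cc hcc].
move: hcc; rewrite !big_ord_recl big_ord0 addr0 => hcc.
set c := r (lift ord0 (lift ord0 ord0)).
pose J := fun t : R => exists k, t = k * c.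
have hJ : is_ideal J.
  split; first by exists 0; rewrite mul0r.
    by move=> ? ? [k1 ->] [k2 ->]; exists (k1 + k2); rewrite mulrDl.
  by move=> t ? [k ->]; exists (t * k); rewrite mulrA.
pose A : 'M[R]_2 := \matrix_(i, j) if nat_of_ord i == 0%N then
   (if nat_of_ord j == 0%N then r ord0 else r (lift ord0 ord0))
   else (if nat_of_ord j == 0%N then - cc (lift ord0 ord0) else cc ord0).
have [|B [dB hB]] := H J hJ A.
  exists (- cc (lift ord0 (lift ord0 ord0))).
  rewrite det2 !mxE /= -[X in _ - X]hcc. rewrite /c; ring.
have [t0 ht0] := hB 0 0; have [t1 ht1] := hB 0 1.
move: ht0 ht1; rewrite !mxE /= => ht0 ht1.
exists (fun i : 'I_2 => if nat_of_ord i == 0%N then t0 else t1).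
exists (fun i : 'I_2 => if nat_of_ord i == 0%N then B 1 1 else - B 1 0).
rewrite !big_ord_recl big_ord0 addr0 /=.
have -> : r (widen_ord (leqnSn 2) ord0) = r ord0 by congr r; apply: val_inj.
have -> : r (widen_ord (leqnSn 2) (lift ord0 ord0)) = r (lift ord0 ord0)
  by congr r; apply: val_inj.
have -> : r ord_max = c by congr r; apply: val_inj.
rewrite -dB det2.
have -> : r ord0 + t0 * c = B 0 0 by rewrite -ht0; ring.
have -> : r (lift ord0 ord0) + t1 * c = B 0 1 by rewrite -ht1; ring.
ring.
Qed.

Theorem mainTheorem3 (R : comPzRingType) :
  (sr_le R 2 <-> (forall I : R -> Prop, is_ideal I -> SL_surj I 2)) /\
  ((forall I : R -> Prop, is_ideal I -> SL_surj I 2) <->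
   (forall I : R -> Prop, is_ideal I -> forall n : nat, (2 <= n)%N -> SL_surj I n)).
Proof.
split; split.
- move=> hsr I hI A; exact: (base2 hI (stab2_of_sr hsr)).
- exact: sr_of_SL2.
- move=> H I hI n hn A; exact: (all_n hI (stab2_of_sr (sr_of_SL2 H)) hn).
- by move=> H I hI; apply: H.
Qed.
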